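(* Let $\mathcal U=(V,\tilde V,W,\tilde W,R)$ be an ordered gradient space, let $\psi_1,\psi_2\in B_+$, and set $\Omega'(\psi_1,\psi_2)=\{v\in V:0\le v\le\psi_1\text{ and }v\le\psi_2\}$. Then there exists a unique $u\in\Omega'(\psi_1,\psi_2)$ such that $\|\max(\psi_1,\psi_2)-u\|_V=\inf_{v\in\Omega'(\psi_1,\psi_2)}\|\max(\psi_1,\psi_2)-v\|_V$.
   Context: A gradient space $\mathcal U=(V,\tilde V,W,\tilde W,R)$ consists of vector spaces $\tilde V,\tilde W$ over $\mathbf R$ or $\mathbf C$, a relation $R\subseteq\tilde V\times\tilde W$ closed under addition and under multiplication by positive scalars, and linear subspaces $V\subseteq\tilde V$, $W\subseteq\tilde W$ such that $V$ is a reflexive Banach space (norm $\|\cdot\|_V$), $W$ is a reflexive strictly convex Banach space, for every $(u,g)\in R\cap(V\times W)$ there is $g'\in W$ with $(-u,g')\in R$, and $R\cap(V\times W)$ is closed in $V\times W$. A linear preorder on $\tilde V$ is a relation $\le$ with: $a\le a$; $a\le b,\ b\le c\Rightarrow a\le c$; $b\le c\Rightarrow a+b\le a+c$; $a\le b,\ \alpha\in[0,\infty)\Rightarrow\alpha a\le\alpha b$. A preordered gradient space is a gradient space with a linear preorder $\le$ on $\tilde V$ such that if $u_i\in V$, $\psi\in\tilde V$, $u_i\le\psi$ for all $i$ and $u_i\to u$ in $V$, then $u\le\psi$. An ordered gradient space is a preordered gradient space such that $V$ is strictly convex and, for $u,v\in V$, $0\le u\le v$ implies $\|u\|_V\le\|v\|_V$.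 Define $B_+=\{\psi\in\tilde V:0\le\psi\le u\text{ for some }u\in V\}$. For $\psi_1,\psi_2\in B_+$, $\max(\psi_1,\psi_2)$ denotes the unique element $u$ of $\Omega(\psi_1,\psi_2)=\{u\in V:u\ge\psi_1,\ u\ge\psi_2\}$ minimizing $\|u\|_V$ over $\Omega(\psi_1,\psi_2)$ (it exists and is unique). *)

(* Defs.v *)
From Stdlib Require Import Reals.
Open Scope R_scope.

Record VecSpace := mkVecSpace {
  vs_car :> Type;
  vs_add : vs_car -> vs_car -> vs_car;
  vs_zero : vs_car;
  vs_opp : vs_car -> vs_car;
  vs_scal : R -> vs_car -> vs_car;
  vs_addA : forall x y z, vs_add x (vs_add y z) = vs_add (vs_add x y) z;
  vs_addC : forall x y, vs_add x y = vs_add y x;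
  vs_add0 : forall x, vs_add x vs_zero = x;
  vs_addN : forall x, vs_add x (vs_opp x) = vs_zero;
  vs_scalA : forall a b x, vs_scal a (vs_scal b x) = vs_scal (a * b) x;
  vs_scal1 : forall x, vs_scal 1 x = x;
  vs_scalDl : forall a b x, vs_scal (a + b) x = vs_add (vs_scal a x) (vs_scal b x);
  vs_scalDr : forall a x y, vs_scal a (vs_add x y) = vs_add (vs_scal a x) (vs_scal a y)
}.

Arguments vs_add {v}.
Arguments vs_zero {v}.
Arguments vs_opp {v}.
Arguments vs_scal {v}.

Definition vs_sub {E : VecSpace} (x y : E) : E := vs_add x (vs_opp y).

Section Normed.
Variable E : VecSpace.
Variable inS : E -> Prop.
Variable n : E -> R.            (* its norm (only meaningful on inS) *)

Definition is_subspace : Prop :=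
  inS vs_zero /\
  (forall x y, inS x -> inS y -> inS (vs_add x y)) /\
  (forall a x, inS x -> inS (vs_scal a x)).

Definition is_norm_on : Prop :=
  (forall x, inS x -> 0 <= n x) /\
  (forall x, inS x -> n x = 0 -> x = vs_zero) /\
  (forall a x, inS x -> n (vs_scal a x) = Rabs a * n x) /\
  (forall x y, inS x -> inS y -> n (vs_add x y) <= n x + n y).

Definition converges (u : nat -> E) (l : E) : Prop :=
  forall eps, 0 < eps -> exists N, forall k, (N <= k)%nat -> n (vs_sub (u k) l) < eps.

Definition cauchy (u : nat -> E) : Prop :=
  forall eps, 0 < eps -> exists N, forall p q, (N <= p)%nat -> (N <= q)%nat ->
    n (vs_sub (u p) (u q)) < eps.

Definition is_banach : Prop :=
  is_subspace /\ is_norm_on /\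
  (forall u : nat -> E, (forall k, inS (u k)) -> cauchy u ->
     exists l, inS l /\ converges u l).

(** bounded linear functionals on the subspace (the dual space);
    two functionals are identified when they agree on the subspace. *)
Definition bounded_linear (f : E -> R) : Prop :=
  (forall x y, inS x -> inS y -> f (vs_add x y) = f x + f y) /\
  (forall a x, inS x -> f (vs_scal a x) = a * f x) /\
  (exists C, forall x, inS x -> Rabs (f x) <= C * n x).

(** bounded linear functionals on the dual (the bidual space),
    the dual carrying the operator norm *)
Definition bidual_elem (Phi : (E -> R) -> R) : Prop :=
  (forall f g, bounded_linear f -> bounded_linear g ->
     (forall x, inS x -> f x = g x) -> Phi f = Phi g) /\
  (forall f g, bounded_linear f -> bounded_linear g ->
     Phi (fun x => f x + g x) = Phi f + Phi g) /\
  (forall a f, bounded_linear f -> Phi (fun x => a * f x) = a * Phi f) /\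
  (exists C, forall f M, bounded_linear f -> 0 <= M ->
     (forall x, inS x -> Rabs (f x) <= M * n x) -> Rabs (Phi f) <= C * M).

Definition is_reflexive : Prop :=
  forall Phi, bidual_elem Phi ->
    exists v, inS v /\ forall f, bounded_linear f -> Phi f = f v.

Definition is_strictly_convex : Prop :=
  forall x y, inS x -> inS y -> n x = 1 -> n y = 1 -> x <> y ->
    n (vs_scal (/ 2) (vs_add x y)) < 1.

End Normed.

Definition gradient_space (Vt Wt : VecSpace)
  (inV : Vt -> Prop) (nV : Vt -> R) (inW : Wt -> Prop) (nW : Wt -> R)
  (Rel : Vt -> Wt -> Prop) : Prop :=
  (forall u g u' g', Rel u g -> Rel u' g' -> Rel (vs_add u u') (vs_add g g')) /\
  (forall a u g, 0 < a -> Rel u g -> Rel (vs_scal a u) (vs_scal a g)) /\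
  is_banach Vt inV nV /\ is_reflexive Vt inV nV /\
  is_banach Wt inW nW /\ is_reflexive Wt inW nW /\ is_strictly_convex Wt inW nW /\
  (forall u g, inV u -> inW g -> Rel u g -> exists g', inW g' /\ Rel (vs_opp u) g') /\
  (forall (uk : nat -> Vt) (gk : nat -> Wt) u g,
     (forall k, inV (uk k) /\ inW (gk k) /\ Rel (uk k) (gk k)) ->
     inV u -> inW g -> converges Vt nV uk u -> converges Wt nW gk g ->
     Rel u g).

Definition linear_preorder (Vt : VecSpace) (le : Vt -> Vt -> Prop) : Prop :=
  (forall a, le a a) /\
  (forall a b c, le a b -> le b c -> le a c) /\
  (forall a b c, le b c -> le (vs_add a b) (vs_add a c)) /\
  (forall a b al, le a b -> 0 <= al -> le (vs_scal al a) (vs_scal al b)).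

Definition preordered_gradient_space (Vt Wt : VecSpace)
  (inV : Vt -> Prop) (nV : Vt -> R) (inW : Wt -> Prop) (nW : Wt -> R)
  (Rel : Vt -> Wt -> Prop) (le : Vt -> Vt -> Prop) : Prop :=
  gradient_space Vt Wt inV nV inW nW Rel /\
  linear_preorder Vt le /\
  (forall (uk : nat -> Vt) u psi,
     (forall k, inV (uk k)) -> (forall k, le (uk k) psi) ->
     inV u -> converges Vt nV uk u -> le u psi).

Definition ordered_gradient_space (Vt Wt : VecSpace)
  (inV : Vt -> Prop) (nV : Vt -> R) (inW : Wt -> Prop) (nW : Wt -> R)
  (Rel : Vt -> Wt -> Prop) (le : Vt -> Vt -> Prop) : Prop :=
  preordered_gradient_space Vt Wt inV nV inW nW Rel le /\
  is_strictly_convex Vt inV nV /\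
  (forall u v, inV u -> inV v -> le vs_zero u -> le u v -> nV u <= nV v).

Definition Bplus (Vt : VecSpace) (inV : Vt -> Prop) (le : Vt -> Vt -> Prop)
  (psi : Vt) : Prop :=
  le vs_zero psi /\ exists u, inV u /\ le psi u.

Definition Omega (Vt : VecSpace) (inV : Vt -> Prop) (le : Vt -> Vt -> Prop)
  (psi1 psi2 u : Vt) : Prop :=
  inV u /\ le psi1 u /\ le psi2 u.

(** m is max(ψ1,ψ2): the (unique) norm minimizer over Ω(ψ1,ψ2) *)
Definition is_max (Vt : VecSpace) (inV : Vt -> Prop) (nV : Vt -> R)
  (le : Vt -> Vt -> Prop) (psi1 psi2 m : Vt) : Prop :=
  Omega Vt inV le psi1 psi2 m /\
  (forall v, Omega Vt inV le psi1 psi2 v -> nV m <= nV v).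

Definition Omega' (Vt : VecSpace) (inV : Vt -> Prop) (le : Vt -> Vt -> Prop)
  (psi1 psi2 v : Vt) : Prop :=
  inV v /\ le vs_zero v /\ le v psi1 /\ le v psi2.

Definition is_inf (A : R -> Prop) (x : R) : Prop :=
  (forall r, A r -> x <= r) /\
  (forall y, (forall r, A r -> y <= r) -> y <= x).

(* Main.v *)
Require Import Defs.
From Stdlib Require Import Reals Lra Lia List.
From Stdlib Require Import Classical ClassicalEpsilon ProofIrrelevance FunctionalExtensionality.
From mathcomp Require ssreflect ssrbool boolp classical_sets.
Open Scope R_scope.

Lemma zornP (T : Type) (Rl : T -> T -> Prop) :
  (forall t, Rl t t) -> (forall r s t, Rl r s -> Rl s t -> Rl r t) ->
  (forall s t, Rl s t -> Rl t s -> s = t) ->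
  (forall A : T -> Prop, (forall x y, A x -> A y -> Rl x y \/ Rl y x) ->
     exists t, forall s, A s -> Rl s t) ->
  exists t, forall s, Rl t s -> s = t.
Proof.
intros h1 h2 h3 h4.
assert (E : forall x y, Rl x y <-> boolp.asbool (Rl x y) = true).
{ intros x y. split; intro H.
  - apply (ssrbool.introT (boolp.asboolP _)); exact H.
  - apply (ssrbool.elimT (boolp.asboolP _)); exact H. }
destruct (@classical_sets.Zorn T (fun x y => boolp.asbool (Rl x y))) as [t ht].
- intro t; apply E; auto.
- intros r s t a b; apply E; apply E in a; apply E in b; eauto.
- intros s t a b; apply E in a; apply E in b; eauto.
- intros A tot. destruct (h4 A) as [t ht].
  + intros x y ax ay. destruct (tot x y ax ay) as [a|a]; [left|right]; apply E; exact a.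
  + exists t. intros s As. apply E. auto.
- exists t. intros s hs. apply ht. apply E; exact hs.
Qed.

(** * Vector space basics *)
Lemma vadd_reg_l {E : VecSpace} (a b c : E) : vs_add a b = vs_add a c -> b = c.
Proof.
intro H.
assert (H' : vs_add (vs_opp a) (vs_add a b) = vs_add (vs_opp a) (vs_add a c)) by (rewrite H; reflexivity).
rewrite !vs_addA in H'.
rewrite (vs_addC _ (vs_opp a) a), vs_addN in H'.
rewrite !(vs_addC _ vs_zero), !vs_add0 in H'. exact H'.
Qed.

Lemma vscal0 {E : VecSpace} (x : E) : vs_scal 0 x = vs_zero.
Proof.
apply (vadd_reg_l (vs_scal 0 x)). rewrite vs_add0, <- vs_scalDl.
f_equal; ring.
Qed.

Lemma vopp_scal {E : VecSpace} (x : E) : vs_opp x = vs_scal (-1) x.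
Proof.
apply (vadd_reg_l x). rewrite vs_addN.
rewrite <- (vs_scal1 _ x) at 1. rewrite <- vs_scalDl.
replace (1 + -1) with 0 by ring. rewrite vscal0; reflexivity.
Qed.

Lemma vscalz {E : VecSpace} (a : R) : vs_scal a (@vs_zero E) = vs_zero.
Proof. rewrite <- (vscal0 vs_zero), vs_scalA, Rmult_0_r; reflexivity. Qed.

(** reflection for linear identities *)
Inductive vex := At (i : nat) | Zr | Ad (a b : vex) | Op (a : vex) | Sc (r : R) (a : vex).

Fixpoint vden {E : VecSpace} (l : list E) (e : vex) : E :=
  match e with
  | At i => nth i l vs_zero
  | Zr => vs_zero
  | Ad a b => vs_add (vden l a) (vden l b)
  | Op a => vs_opp (vden l a)
  | Sc r a => vs_scal r (vden l a)
  end.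

Fixpoint vcoef (e : vex) (i : nat) : R :=
  match e with
  | At j => if Nat.eqb i j then 1 else 0
  | Zr => 0
  | Ad a b => vcoef a i + vcoef b i
  | Op a => - vcoef a i
  | Sc r a => r * vcoef a i
  end.

Fixpoint lcomb {E : VecSpace} (l : list E) (c : nat -> R) (k : nat) : E :=
  match l with
  | nil => vs_zero
  | x :: l' => vs_add (vs_scal (c k) x) (lcomb l' c (S k))
  end.

Lemma lcomb_ext {E : VecSpace} (l : list E) c1 c2 k :
  (forall i, (k <= i)%nat -> c1 i = c2 i) -> lcomb l c1 k = lcomb l c2 k.
Proof.
revert k; induction l; intros k H; simpl; auto. rewrite H by lia. rewrite (IHl (S k)); auto.
intros i Hi; apply H; lia.
Qed.

Lemma vadd4 {E : VecSpace} (a b c d : E) :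
  vs_add (vs_add a b) (vs_add c d) = vs_add (vs_add a c) (vs_add b d).
Proof.
rewrite <- !vs_addA. f_equal. rewrite !vs_addA. f_equal. apply vs_addC.
Qed.

Lemma lcomb_add {E : VecSpace} (l : list E) c1 c2 k :
  lcomb l (fun i => c1 i + c2 i) k = vs_add (lcomb l c1 k) (lcomb l c2 k).
Proof.
revert k; induction l; intro k; simpl.
- rewrite vs_add0; reflexivity.
- rewrite IHl, vs_scalDl, vadd4; reflexivity.
Qed.

Lemma lcomb_scal {E : VecSpace} (l : list E) r c k :
  lcomb l (fun i => r * c i) k = vs_scal r (lcomb l c k).
Proof.
revert k; induction l; intro k; simpl.
- rewrite vscalz; reflexivity.
- rewrite IHl, vs_scalDr, vs_scalA; reflexivity.
Qed.

Lemma lcomb_zero {E : VecSpace} (l : list E) k : lcomb l (fun _ => 0) k = vs_zero.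
Proof.
revert k; induction l; intro k; simpl; auto. rewrite IHl, vscal0, vs_add0; reflexivity.
Qed.

Lemma lcomb_at {E : VecSpace} (l : list E) j k :
  lcomb l (fun i => if Nat.eqb i (k + j) then 1 else 0) k = nth j l vs_zero.
Proof.
revert j k; induction l; intros j k; simpl.
- destruct j; reflexivity.
- destruct j as [|j].
  + rewrite Nat.add_0_r, Nat.eqb_refl, vs_scal1.
    rewrite (lcomb_ext l _ (fun _ => 0)). rewrite lcomb_zero, vs_add0; reflexivity.
    intros i Hi. destruct (Nat.eqb_spec i k); [lia|reflexivity].
  + replace (Nat.eqb k (k + S j)) with false by (symmetry; apply Nat.eqb_neq; lia).
    rewrite vscal0. rewrite (vs_addC _ vs_zero), vs_add0.
    rewrite <- (IHl j (S k)). apply lcomb_ext. intros i _.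
    replace (S k + j)%nat with (k + S j)%nat by lia. reflexivity.
Qed.

Lemma vden_lcomb {E : VecSpace} (l : list E) e :
  vden l e = lcomb l (vcoef e) 0.
Proof.
induction e; simpl.
- rewrite <- (lcomb_at l i 0). apply lcomb_ext. intros; reflexivity.
- rewrite lcomb_zero; reflexivity.
- rewrite IHe1, IHe2, <- lcomb_add; reflexivity.
- rewrite IHe, vopp_scal, <- lcomb_scal. apply lcomb_ext. intros; ring.
- rewrite IHe, <- lcomb_scal; reflexivity.
Qed.

Lemma vreif_eq {E : VecSpace} (l : list E) e1 e2 :
  (forall i, vcoef e1 i = vcoef e2 i) -> vden l e1 = vden l e2.
Proof. intro H. rewrite !vden_lcomb. apply lcomb_ext; auto. Qed.

Ltac vlookup x l :=
  lazymatch l with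
  | (x :: _) => constr:(0%nat)
  | (_ :: ?l') => let n := vlookup x l' in constr:(S n)
  end.

Ltac vreify l t :=
  lazymatch t with
  | vs_add ?a ?b => let ra := vreify l a in let rb := vreify l b in constr:(Ad ra rb)
  | vs_sub ?a ?b => let ra := vreify l a in let rb := vreify l b in constr:(Ad ra (Op rb))
  | vs_opp ?a => let ra := vreify l a in constr:(Op ra)
  | vs_scal ?r ?a => let ra := vreify l a in constr:(Sc r ra)
  | vs_zero => constr:(Zr)
  | _ => let i := vlookup t l in constr:(At i)
  end.

Ltac vcases l i tac :=
  lazymatch l with
  | nil => simpl; tac
  | _ :: ?l' => destruct i as [|i]; [simpl; tac | vcases l' i tac]
  end.

Ltac vsolveT l tac :=
  lazymatch goal with
  | |- ?a = ?b =>
    let ea := vreify l a in let eb := vreify l b in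
    change (vden l ea = vden l eb); apply vreif_eq;
    let i := fresh "i" in intro i; vcases l i tac
  end.

Tactic Notation "vsolve" constr(l) := vsolveT l ltac:(ring).


Definition infR (A : R -> Prop) : R := epsilon (inhabits 0) (fun g => is_inf A g).

Lemma infR_spec (A : R -> Prop) : (exists r, A r) -> (exists b, forall r, A r -> b <= r) ->
  is_inf A (infR A).
Proof.
intros [r0 Hr0] [b Hb]. unfold infR. apply epsilon_spec.
destruct (completeness (fun y => A (- y))) as [m [Hm1 Hm2]].
- exists (- b). intros y Hy. apply Hb in Hy. lra.
- exists (- r0). rewrite Ropp_involutive. exact Hr0.
- exists (- m). split.
  + intros r Hr. assert (- r <= m). { apply Hm1. rewrite Ropp_involutive; exact Hr. } lra.
  + intros y Hy. assert (m <= - y). { apply Hm2. intros x Hx. apply Hy in Hx. lra. } lra.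
Qed.

Lemma inf_lb A g r : is_inf A g -> A r -> g <= r.
Proof. intros [H _] Hr; auto. Qed.
Lemma inf_glb A g y : is_inf A g -> (forall r, A r -> y <= r) -> y <= g.
Proof. intros [_ H] Hr; auto. Qed.
Lemma inf_add A B a b c : is_inf A a -> is_inf B b ->
  (forall r1 r2, A r1 -> B r2 -> c <= r1 + r2) -> c <= a + b.
Proof.
intros HA HB H.
assert (c - a <= b).
{ apply (inf_glb B). exact HB. intros r2 Hr2.
  assert (c - r2 <= a). { apply (inf_glb A). exact HA. intros r1 Hr1. specialize (H r1 r2 Hr1 Hr2). lra. }
  lra. }
lra.
Qed.
Lemma inf_scal A B a b s : is_inf A a -> is_inf B b -> 0 < s ->
  (forall r, B r -> exists r', A r' /\ r' <= s * r) -> a <= s * b.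
Proof.
intros HA HB Hs H.
assert (a / s <= b).
{ apply (inf_glb B). exact HB. intros r Hr. destruct (H r Hr) as [r' [Hr' Hle]].
  assert (Har : a <= s * r) by (apply Rle_trans with r'; auto; apply (inf_lb A); auto).
  apply Rmult_le_reg_l with s; auto. replace (s * (a / s)) with a by (field; lra). exact Har. }
replace a with (s * (a / s)) by (field; lra). apply Rmult_le_compat_l; lra.
Qed.
Lemma inf_unique A a b : is_inf A a -> is_inf A b -> a = b.
Proof.
intros Ha Hb. apply Rle_antisym.
- apply (inf_glb A b a Hb). intros r Hr; apply (inf_lb A); auto.
- apply (inf_glb A a b Ha). intros r Hr; apply (inf_lb A); auto.
Qed.

(** * subspaces and sublinear functionals *)
Section Sub.
Context {E : VecSpace} {S : E -> Prop}.
Lemma sub0 : is_subspace E S -> S vs_zero. Proof. intros [h _]; auto. Qed.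
Lemma subadd : is_subspace E S -> forall x y, S x -> S y -> S (vs_add x y).
Proof. intros [_ [h _]]; auto. Qed.
Lemma subscal : is_subspace E S -> forall a x, S x -> S (vs_scal a x).
Proof. intros [_ [_ h]]; auto. Qed.
Lemma subopp : is_subspace E S -> forall x, S x -> S (vs_opp x).
Proof. intros H x Hx. rewrite vopp_scal. apply subscal; auto. Qed.
Lemma subsub : is_subspace E S -> forall x y, S x -> S y -> S (vs_sub x y).
Proof. intros H x y Hx Hy. apply subadd; auto. apply subopp; auto. Qed.
End Sub.

Definition sublin (E : VecSpace) (S : E -> Prop) (p : E -> R) : Prop :=
  (forall x y, S x -> S y -> p (vs_add x y) <= p x + p y) /\
  (forall a x, 0 < a -> S x -> p (vs_scal a x) <= a * p x).

Section Sublin.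
Context {E : VecSpace} {S : E -> Prop} (HS : is_subspace E S).

Lemma sublin_zero p : sublin E S p -> p vs_zero = 0.
Proof.
intros [_ h]. pose proof (h 2 vs_zero ltac:(lra) (sub0 HS)) as h1.
pose proof (h (/2) vs_zero ltac:(lra) (sub0 HS)) as h2.
rewrite vscalz in h1, h2. lra.
Qed.

Lemma sublin_hom p a x : sublin E S p -> 0 < a -> S x -> p (vs_scal a x) = a * p x.
Proof.
intros Hp Ha Hx. pose proof Hp as [_ h]. apply Rle_antisym; auto.
pose proof (h (/a) (vs_scal a x) ltac:(apply Rinv_0_lt_compat; auto) (subscal HS a x Hx)) as h1.
rewrite vs_scalA, Rinv_l, vs_scal1 in h1 by lra.
apply Rmult_le_compat_l with (r := a) in h1; [|lra].
rewrite <- Rmult_assoc, Rinv_r, Rmult_1_l in h1 by lra. exact h1.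
Qed.

Lemma sublin_hom0 p a x : sublin E S p -> 0 <= a -> S x -> p (vs_scal a x) = a * p x.
Proof.
intros Hp Ha Hx. destruct Ha as [Ha|Ha]. apply sublin_hom; auto.
subst. rewrite vscal0, sublin_zero; auto. ring.
Qed.

Lemma sublin_opp p x : sublin E S p -> S x -> 0 <= p x + p (vs_opp x).
Proof.
intros Hp Hx. pose proof Hp as [h _].
rewrite <- (sublin_zero p Hp). rewrite <- (vs_addN _ x). apply h; auto. apply subopp; auto.
Qed.

Definition Sh (p : E -> R) (x y : E) : R :=
  infR (fun r => exists t, 0 <= t /\ r = p (vs_add y (vs_scal t x)) - t * p x).

Lemma Sh_spec p x y : sublin E S p -> S x -> S y ->
  is_inf (fun r => exists t, 0 <= t /\ r = p (vs_add y (vs_scal t x)) - t * p x) (Sh p x y).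
Proof.
intros Hp Hx Hy. apply infR_spec.
- exists (p (vs_add y (vs_scal 0 x)) - 0 * p x). exists 0. split; [lra|reflexivity].
- exists (- p (vs_opp y)). intros r [t [Ht ->]].
  pose proof Hp as [h _].
  assert (Hyt : S (vs_add y (vs_scal t x))) by (apply subadd; auto; apply subscal; auto).
  pose proof (h _ _ Hyt (subopp HS y Hy)) as h1.
  replace (vs_add (vs_add y (vs_scal t x)) (vs_opp y)) with (vs_scal t x) in h1
    by vsolve (x :: y :: nil).
  rewrite sublin_hom0 in h1; auto. lra.
Qed.

Lemma Sh_le p x y : sublin E S p -> S x -> S y -> Sh p x y <= p y.
Proof.
intros Hp Hx Hy. replace (p y) with (p (vs_add y (vs_scal 0 x)) - 0 * p x).
apply (inf_lb _ _ _ (Sh_spec p x y Hp Hx Hy)). exists 0; split; [lra|reflexivity].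
replace (vs_add y (vs_scal 0 x)) with y by vsolve (x :: y :: nil). ring.
Qed.

Lemma Sh_negx p x : sublin E S p -> S x -> Sh p x (vs_opp x) <= - p x.
Proof.
intros Hp Hx. replace (- p x) with (p (vs_add (vs_opp x) (vs_scal 1 x)) - 1 * p x).
apply (inf_lb _ _ _ (Sh_spec p x _ Hp Hx (subopp HS x Hx))). exists 1; split; [lra|reflexivity].
replace (vs_add (vs_opp x) (vs_scal 1 x)) with (@vs_zero E) by vsolve (x :: nil).
rewrite sublin_zero; auto. ring.
Qed.

Lemma Sh_sublin p x : sublin E S p -> S x -> sublin E S (Sh p x).
Proof.
intros Hp Hx. pose proof Hp as [h1 h2]. split.
- intros y1 y2 Hy1 Hy2.
  apply (inf_add _ _ _ _ _ (Sh_spec p x y1 Hp Hx Hy1) (Sh_spec p x y2 Hp Hx Hy2)).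
  intros r1 r2 [t1 [Ht1 ->]] [t2 [Ht2 ->]].
  apply Rle_trans with (p (vs_add (vs_add y1 y2) (vs_scal (t1 + t2) x)) - (t1 + t2) * p x).
  + apply (inf_lb _ _ _ (Sh_spec p x _ Hp Hx (subadd HS _ _ Hy1 Hy2))).
    exists (t1 + t2); split; [lra|reflexivity].
  + replace (vs_add (vs_add y1 y2) (vs_scal (t1 + t2) x)) with
      (vs_add (vs_add y1 (vs_scal t1 x)) (vs_add y2 (vs_scal t2 x))) by vsolve (x :: y1 :: y2 :: nil).
    pose proof (h1 (vs_add y1 (vs_scal t1 x)) (vs_add y2 (vs_scal t2 x))) as hh.
    assert (S (vs_add y1 (vs_scal t1 x))) by (apply subadd; auto; apply subscal; auto).
    assert (S (vs_add y2 (vs_scal t2 x))) by (apply subadd; auto; apply subscal; auto).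
    specialize (hh H H0). lra.
- intros a y Ha Hy.
  apply (inf_scal _ _ _ _ _ (Sh_spec p x _ Hp Hx (subscal HS a y Hy)) (Sh_spec p x y Hp Hx Hy) Ha).
  intros r [t [Ht ->]].
  exists (p (vs_add (vs_scal a y) (vs_scal (a * t) x)) - (a * t) * p x). split.
  + exists (a * t); split; [apply Rmult_le_pos; lra|reflexivity].
  + replace (vs_add (vs_scal a y) (vs_scal (a * t) x)) with (vs_scal a (vs_add y (vs_scal t x)))
      by vsolve (x :: y :: nil).
    rewrite sublin_hom; auto. lra. apply subadd; auto; apply subscal; auto.
Qed.

End Sublin.

Definition restrS {E : VecSpace} (S : E -> Prop) (g : E -> R) : E -> R :=
  fun y => if excluded_middle_informative (S y) then g y else 0.

Lemma restrS_in {E : VecSpace} (S : E -> Prop) g y : S y -> restrS S g y = g y.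
Proof. intro H. unfold restrS. destruct (excluded_middle_informative (S y)); tauto. Qed.
Lemma restrS_out {E : VecSpace} (S : E -> Prop) g y : ~ S y -> restrS S g y = 0.
Proof. intro H. unfold restrS. destruct (excluded_middle_informative (S y)); tauto. Qed.

Lemma sublin_ext {E : VecSpace} (S : E -> Prop) p q : is_subspace E S ->
  (forall x, S x -> p x = q x) -> sublin E S p -> sublin E S q.
Proof.
intros HS H [h1 h2]. split.
- intros x y Hx Hy. rewrite <- !H; auto. apply subadd; auto.
- intros a x Ha Hx. rewrite <- !H; auto. apply subscal; auto.
Qed.

Theorem HB {E : VecSpace} (S : E -> Prop) (p : E -> R) (z : E) :
  is_subspace E S -> sublin E S p -> S z ->
  exists f : E -> R,
    (forall x y, S x -> S y -> f (vs_add x y) = f x + f y) /\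
    (forall a x, S x -> f (vs_scal a x) = a * f x) /\
    (forall x, S x -> f x <= p x) /\ p z <= f z.
Proof.
intros HS Hp Hz.
set (p0 := Sh p z).
assert (Hp0 : sublin E S p0) by (apply (Sh_sublin (S:=S)); auto).
set (Q := {q : E -> R | sublin E S q /\ (forall x, S x -> q x <= p0 x) /\ (forall x, ~ S x -> q x = 0)}).
set (Rl := fun q1 q2 : Q => forall x, S x -> proj1_sig q2 x <= proj1_sig q1 x).
destruct (zornP Q Rl) as [[qf [Hq1 [Hq2 Hq3]]] Hmax].
- intros t x _; lra.
- intros r s t a b x Hx. specialize (a x Hx); specialize (b x Hx); lra.
- intros [s hs] [t ht] a b. apply subset_eq_compat. extensionality x.
  destruct (classic (S x)) as [Hx|Hx].
  + specialize (a x Hx); specialize (b x Hx); simpl in *; lra.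
  + pose proof hs as [_ [_ hs1]]; pose proof ht as [_ [_ ht1]]. rewrite hs1, ht1; auto.
- intros A tot.
  set (G := fun g : E -> R => g = p0 \/ exists q, A q /\ g = proj1_sig q).
  assert (G_sub : forall g, G g -> sublin E S g).
  { intros g [->|[q [?Aq ->]]]; auto. exact (proj1 (proj2_sig q)). }
  assert (G_le : forall g, G g -> forall x, S x -> g x <= p0 x).
  { intros g [->|[q [?Aq ->]]] x Hx; [lra|]. exact (proj1 (proj2 (proj2_sig q)) x Hx). }
  assert (G_tot : forall g1 g2, G g1 -> G g2 ->
     (forall x, S x -> g1 x <= g2 x) \/ (forall x, S x -> g2 x <= g1 x)).
  { intros g1 g2 H1 H2.
    destruct H1 as [->|[q1 [Hq1' ->]]]; destruct H2 as [->|[q2 [Hq2' ->]]].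
    - left; intros; lra.
    - right; intros; apply G_le; auto; right; eauto.
    - left; intros; apply G_le; auto; right; eauto.
    - destruct (tot q1 q2 Hq1' Hq2') as [h|h]; [right|left]; intros x Hx; apply h; auto. }
  set (C := fun x r => exists g, G g /\ r = g x).
  set (qs := restrS S (fun x => infR (C x))).
  assert (qs_spec : forall x, S x -> is_inf (C x) (qs x)).
  { intros x Hx. unfold qs. rewrite restrS_in; auto. apply infR_spec.
    - exists (p0 x). exists p0. split; [left; auto|auto].
    - exists (- p0 (vs_opp x)). intros r [g [Hg ->]].
      pose proof (sublin_opp HS g x (G_sub g Hg) Hx).
      pose proof (G_le g Hg (vs_opp x) (subopp HS x Hx)). lra. }
  assert (qs_sub : sublin E S qs).
  { split.
    - intros x y Hx Hy. apply (inf_add _ _ _ _ _ (qs_spec x Hx) (qs_spec y Hy)).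
      intros r1 r2 [g1 [Hg1 ->]] [g2 [Hg2 ->]].
      destruct (G_sub g1 Hg1) as [a1 _]; destruct (G_sub g2 Hg2) as [a2 _].
      destruct (G_tot g1 g2 Hg1 Hg2) as [h|h].
      + apply Rle_trans with (g1 (vs_add x y)).
        * apply (inf_lb _ _ _ (qs_spec _ (subadd HS x y Hx Hy))). exists g1; auto.
        * specialize (a1 x y Hx Hy). specialize (h y Hy). lra.
      + apply Rle_trans with (g2 (vs_add x y)).
        * apply (inf_lb _ _ _ (qs_spec _ (subadd HS x y Hx Hy))). exists g2; auto.
        * specialize (a2 x y Hx Hy). specialize (h x Hx). lra.
    - intros a x Ha Hx.
      apply (inf_scal _ _ _ _ _ (qs_spec _ (subscal HS a x Hx)) (qs_spec x Hx) Ha).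
      intros r [g [Hg ->]]. exists (g (vs_scal a x)). split.
      + exists g; auto.
      + destruct (G_sub g Hg) as [_ h]; auto. }
  assert (HqsQ : sublin E S qs /\ (forall x, S x -> qs x <= p0 x) /\ (forall x, ~ S x -> qs x = 0)).
  { split; [exact qs_sub|split].
    - intros x Hx. apply (inf_lb _ _ _ (qs_spec x Hx)). exists p0; split; [left; auto|auto].
    - intros x Hx. unfold qs. apply restrS_out; auto. }
  exists (exist _ qs HqsQ). intros q Aq x Hx. simpl.
  apply (inf_lb _ _ _ (qs_spec x Hx)). exists (proj1_sig q). split; auto. right; eauto.
-
  assert (Hneg : forall x, S x -> qf (vs_opp x) = - qf x).
  { intros x Hx.
    set (q' := restrS S (Sh qf x)).
    assert (Hq' : sublin E S q' /\ (forall y, S y -> q' y <= p0 y) /\ (forall y, ~ S y -> q' y = 0)).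
    { split; [|split].
      - apply (sublin_ext S (Sh qf x)); auto. intros y Hy; unfold q'; rewrite restrS_in; auto.
        apply (Sh_sublin (S:=S)); auto.
      - intros y Hy. unfold q'; rewrite restrS_in; auto.
        apply Rle_trans with (qf y); auto. apply (Sh_le (S:=S)); auto.
      - intros y Hy; unfold q'; apply restrS_out; auto. }
    pose proof (Hmax (exist _ q' Hq')) as Heq.
    assert (Hle : Rl (exist _ qf (conj Hq1 (conj Hq2 Hq3))) (exist _ q' Hq')).
    { intros y Hy. simpl. unfold q'; rewrite restrS_in; auto. apply (Sh_le (S:=S)); auto. }
    specialize (Heq Hle). apply (f_equal (@proj1_sig _ _)) in Heq. simpl in Heq.
    assert (h1 : q' (vs_opp x) = qf (vs_opp x)) by (rewrite Heq; reflexivity).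
    unfold q' in h1. rewrite restrS_in in h1 by (apply subopp; auto).
    pose proof (Sh_negx HS qf x Hq1 Hx). pose proof (sublin_opp HS qf x Hq1 Hx). lra. }
  pose proof Hq1 as [ha hh].
  exists qf. split; [|split; [|split]].
  + intros x y Hx Hy. apply Rle_antisym; auto.
    assert (qf (vs_opp (vs_add x y)) <= qf (vs_opp x) + qf (vs_opp y)).
    { replace (vs_opp (vs_add x y)) with (vs_add (vs_opp x) (vs_opp y)) by vsolve (x :: y :: nil).
      apply ha; apply subopp; auto. }
    rewrite !Hneg in H; auto. lra. apply subadd; auto.
  + intros a x Hx. destruct (Rtotal_order a 0) as [Ha|[Ha|Ha]].
    * replace (vs_scal a x) with (vs_opp (vs_scal (- a) x)) by vsolve (x :: nil).
      rewrite Hneg by (apply subscal; auto). rewrite (sublin_hom HS qf (-a) x Hq1 ltac:(lra) Hx). ring.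
    * subst. rewrite vscal0, (sublin_zero HS qf Hq1). ring.
    * apply (sublin_hom HS qf); auto.
  + intros x Hx. apply Rle_trans with (p0 x); auto. apply (Sh_le (S:=S)); auto.
  + pose proof (Hq2 (vs_opp z) (subopp HS z Hz)). rewrite Hneg in H by auto.
    pose proof (Sh_negx HS p z Hp Hz). unfold p0 in H. lra.
Qed.

Definition SeqV : VecSpace.
refine (mkVecSpace (nat -> R) (fun a b j => a j + b j) (fun _ => 0) (fun a j => - a j)
  (fun c a j => c * a j) _ _ _ _ _ _ _ _); intros; extensionality j; ring.
Defined.

Definition Bd (a : nat -> R) : Prop := exists K, forall j, Rabs (a j) <= K.

Lemma Bd_sub : is_subspace SeqV Bd.
Proof.
split; [|split].
- exists 0. intro j. simpl. rewrite Rabs_R0; lra.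
- intros x y [K1 H1] [K2 H2]. exists (K1 + K2). intro j. simpl.
  apply Rle_trans with (Rabs (x j) + Rabs (y j)); [apply Rabs_triang|]. specialize (H1 j); specialize (H2 j); lra.
- intros c x [K H]. exists (Rabs c * K). intro j. simpl. rewrite Rabs_mult.
  apply Rmult_le_compat_l; [apply Rabs_pos|auto].
Qed.

Definition lsup (a : nat -> R) : R := infR (fun c => exists k, forall j, (k <= j)%nat -> a j <= c).

Lemma lsup_spec a : Bd a -> is_inf (fun c => exists k, forall j, (k <= j)%nat -> a j <= c) (lsup a).
Proof.
intros [K HK]. apply infR_spec.
- exists K, 0%nat. intros j _. specialize (HK j). apply Rle_trans with (Rabs (a j)); auto. apply RRle_abs.
- exists (- K). intros c [k Hk]. specialize (Hk k (le_n k)). specialize (HK k).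
  pose proof (Rabs_Ropp (a k)). pose proof (RRle_abs (- a k)). lra.
Qed.

Lemma lsup_sublin : sublin SeqV Bd lsup.
Proof.
split.
- intros x y Hx Hy. apply (inf_add _ _ _ _ _ (lsup_spec x Hx) (lsup_spec y Hy)).
  intros r1 r2 [k1 H1] [k2 H2]. apply (inf_lb _ _ _ (lsup_spec _ (subadd Bd_sub x y Hx Hy))).
  exists (Nat.max k1 k2). intros j Hj. simpl.
  specialize (H1 j ltac:(lia)); specialize (H2 j ltac:(lia)). lra.
- intros s x Hs Hx. apply (inf_scal _ _ _ _ _ (lsup_spec _ (subscal Bd_sub s x Hx)) (lsup_spec x Hx) Hs).
  intros r [k Hk]. exists (s * r). split; [|lra]. exists k. intros j Hj. simpl.
  apply Rmult_le_compat_l; [lra|auto].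
Qed.

Lemma banach_limit : exists L : (nat -> R) -> R,
  (forall a b, Bd a -> Bd b -> L (fun j => a j + b j) = L a + L b) /\
  (forall c a, Bd a -> L (fun j => c * a j) = c * L a) /\
  (forall a k c, Bd a -> (forall j, (k <= j)%nat -> a j <= c) -> L a <= c) /\
  (forall a K, (forall j, Rabs (a j) <= K) -> Rabs (L a) <= K).
Proof.
destruct (HB (E := SeqV) Bd lsup (fun _ => 0) Bd_sub lsup_sublin (sub0 Bd_sub))
  as [L [HL1 [HL2 [HL3 _]]]].
assert (Hub : forall a k c, Bd a -> (forall j, (k <= j)%nat -> a j <= c) -> L a <= c).
{ intros a k c Ha H. apply Rle_trans with (lsup a); auto.
  apply (inf_lb _ _ _ (lsup_spec a Ha)). exists k; auto. }
exists L. split; [|split; [|split]].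
- intros a b Ha Hb. exact (HL1 a b Ha Hb).
- intros c a Ha. exact (HL2 c a Ha).
- exact Hub.
- intros a K HK. assert (Ha : Bd a) by (exists K; auto).
  assert (h1 : L a <= K).
  { apply (Hub a 0%nat K Ha). intros j _. apply Rle_trans with (Rabs (a j)); auto. apply RRle_abs. }
  assert (h2 : L (fun j => -1 * a j) <= K).
  { apply (Hub _ 0%nat K (subscal Bd_sub (-1) a Ha)). intros j _.
    simpl. apply Rle_trans with (Rabs (a j)); auto. rewrite <- Rabs_Ropp. replace (-1 * a j) with (- a j) by ring. apply RRle_abs. }
  pose proof (HL2 (-1) a Ha) as h3. simpl in h3. rewrite h3 in h2. apply Rabs_le. lra.
Qed.

Section Norm.
Context {E : VecSpace} {S : E -> Prop} {n : E -> R} (HS : is_subspace E S) (Hn : is_norm_on E S n).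
Lemma n_nonneg x : S x -> 0 <= n x. Proof. destruct Hn as [h _]; auto. Qed.
Lemma n_hom a x : S x -> n (vs_scal a x) = Rabs a * n x. Proof. destruct Hn as [_ [_ [h _]]]; auto. Qed.
Lemma n_tri x y : S x -> S y -> n (vs_add x y) <= n x + n y. Proof. destruct Hn as [_ [_ [_ h]]]; auto. Qed.
Lemma n_eq0 x : S x -> n x = 0 -> x = vs_zero. Proof. destruct Hn as [_ [h _]]; auto. Qed.
Lemma n_zero : n vs_zero = 0.
Proof. rewrite <- (vscalz 0). rewrite n_hom, Rabs_R0 by (apply sub0; auto). ring. Qed.
Lemma n_opp x : S x -> n (vs_opp x) = n x.
Proof. intro Hx. rewrite vopp_scal, n_hom by auto. replace (Rabs (-1)) with 1 by (rewrite Rabs_left; lra). ring. Qed.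
Lemma n_subC x y : S x -> S y -> n (vs_sub x y) = n (vs_sub y x).
Proof.
intros Hx Hy. replace (vs_sub x y) with (vs_opp (vs_sub y x)) by vsolve (x :: y :: nil).
apply n_opp. apply subsub; auto.
Qed.
End Norm.

Lemma sep0 {E : VecSpace} (S : E -> Prop) (n : E -> R) (HS : is_subspace E S) (Hn : is_norm_on E S n)
  (D : E -> Prop) (HDS : forall w, D w -> S w) (HD0 : D vs_zero)
  (HDc : forall a b l, D a -> D b -> 0 <= l <= 1 -> D (vs_add (vs_scal l a) (vs_scal (1 - l) b)))
  (z : E) (Hz : S z) (d : R) (Hd : 0 < d) (Hgap : forall w, D w -> d <= n (vs_sub z w)) :
  exists f, bounded_linear E S n f /\ exists eps, 0 < eps /\ forall w, D w -> f w + eps <= f z.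
Proof.
set (r := d / 2).
assert (Hr : 0 < r) by (unfold r; lra).
set (T := fun y t => 0 <= t /\ exists w, D w /\ n (vs_sub y (vs_scal t w)) <= t * r).
set (q := fun y => infR (T y)).
assert (q_spec : forall y, S y -> is_inf (T y) (q y)).
{ intros y Hy. apply infR_spec.
  - exists (n y / r). split. apply Rmult_le_pos; [apply (n_nonneg Hn); auto|left; apply Rinv_0_lt_compat; auto].
    exists vs_zero. split; auto.
    replace (vs_sub y (vs_scal (n y / r) vs_zero)) with y by vsolve (y :: nil).
    right; field; lra.
  - exists 0. intros t [Ht _]; auto. }
assert (q_T : forall y t, S y -> T y t -> q y <= t).
{ intros y t Hy Ht. apply (inf_lb _ _ _ (q_spec y Hy)); auto. }
assert (Hq : sublin E S q).
{ split.
  - intros x y Hx Hy. apply (inf_add _ _ _ _ _ (q_spec x Hx) (q_spec y Hy)).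
    intros t1 t2 [Ht1 [w1 [Hw1 N1]]] [Ht2 [w2 [Hw2 N2]]].
    apply q_T. apply subadd; auto. split; [lra|].
    assert (Hw : exists w, D w /\ vs_scal (t1 + t2) w = vs_add (vs_scal t1 w1) (vs_scal t2 w2)).
    { destruct (Req_dec (t1 + t2) 0) as [H0|H0].
      - assert (t1 = 0) by lra. assert (t2 = 0) by lra. subst. exists w1. split; auto.
        rewrite H0. vsolve (w1 :: w2 :: nil).
      - exists (vs_add (vs_scal (t1 / (t1 + t2)) w1) (vs_scal (1 - t1 / (t1 + t2)) w2)). split.
        + apply HDc; auto. split.
          * apply Rmult_le_pos; auto. left; apply Rinv_0_lt_compat; lra.
          * apply Rmult_le_reg_l with (t1 + t2); [lra|]. field_simplify; lra.
        + vsolveT (w1 :: w2 :: nil) ltac:(field; lra). }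
    destruct Hw as [w [Hw Hweq]]. exists w. split; auto.
    replace (vs_sub (vs_add x y) (vs_scal (t1 + t2) w)) with
      (vs_add (vs_sub x (vs_scal t1 w1)) (vs_sub y (vs_scal t2 w2))).
    + eapply Rle_trans. apply (n_tri Hn); apply subsub; auto; apply subscal; auto. lra.
    + unfold vs_sub. rewrite Hweq. vsolve (x :: y :: w1 :: w2 :: nil).
  - intros a x Ha Hx. apply (inf_scal _ _ _ _ _ (q_spec _ (subscal HS a x Hx)) (q_spec x Hx) Ha).
    intros t [Ht [w [Hw N]]]. exists (a * t). split; [|lra]. split; [apply Rmult_le_pos; lra|].
    exists w. split; auto.
    replace (vs_sub (vs_scal a x) (vs_scal (a * t) w)) with (vs_scal a (vs_sub x (vs_scal t w)))
      by vsolve (x :: w :: nil).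
    rewrite (n_hom Hn) by (apply subsub; auto; apply subscal; auto).
    rewrite Rabs_right by lra. replace (a * t * r) with (a * (t * r)) by ring.
    apply Rmult_le_compat_l; lra. }
assert (q_le : forall y, S y -> q y <= n y / r).
{ intros y Hy. apply q_T; auto. split.
  apply Rmult_le_pos; [apply (n_nonneg Hn); auto|left; apply Rinv_0_lt_compat; auto].
  exists vs_zero. split; auto.
  replace (vs_sub y (vs_scal (n y / r) vs_zero)) with y by vsolve (y :: nil).
  right; field; lra. }
assert (q_z : 1 <= q z).
{ apply (inf_glb _ _ _ (q_spec z Hz)). intros t [Ht [w [Hw N]]].
  destruct (Rlt_le_dec t 1) as [Hlt|Hge]; [|lra]. exfalso.
  assert (Dtw : D (vs_scal t w)).
  { replace (vs_scal t w) with (vs_add (vs_scal t w) (vs_scal (1 - t) vs_zero)) by vsolve (w :: nil).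
    apply HDc; auto; lra. }
  specialize (Hgap _ Dtw). assert (t * r < d) by (unfold r; nra). lra. }
destruct (HB S q z HS Hq Hz) as [f [Hf1 [Hf2 [Hf3 Hf4]]]].
assert (Hfopp : forall y, S y -> f (vs_opp y) = - f y).
{ intros y Hy. rewrite vopp_scal, Hf2 by auto. ring. }
exists f. split.
- split; [|split]; auto. exists (/ r). intros x Hx. apply Rabs_le. split.
  + assert (f (vs_opp x) <= / r * n x).
    { apply Rle_trans with (q (vs_opp x)). apply Hf3; apply subopp; auto.
      rewrite <- (n_opp Hn x Hx). unfold Rdiv in q_le. rewrite Rmult_comm. apply q_le; apply subopp; auto. }
    rewrite Hfopp in H by auto. lra.
  + apply Rle_trans with (q x); auto. rewrite Rmult_comm. apply q_le; auto.
- assert (Hnz : d <= n z).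
  { specialize (Hgap _ HD0). replace (vs_sub z vs_zero) with z in Hgap by vsolve (z :: nil). exact Hgap. }
  exists (r / n z). split. apply Rdiv_lt_0_compat; lra.
  intros w Hw.
  set (u := vs_scal (r / n z) z).
  assert (Hu : S u) by (apply subscal; auto).
  assert (Hnu : n u = r).
  { unfold u. rewrite (n_hom Hn) by auto. rewrite Rabs_right. field; lra.
    left; apply Rdiv_lt_0_compat; lra. }
  assert (Hfu : r / n z <= f u).
  { unfold u. rewrite Hf2 by auto. replace (r / n z) with (r / n z * 1) at 1 by ring.
    apply Rmult_le_compat_l; [left; apply Rdiv_lt_0_compat; lra|lra]. }
  assert (Hwu : q (vs_add w u) <= 1).
  { apply q_T. apply subadd; auto. split; [lra|]. exists w. split; auto.
    replace (vs_sub (vs_add w u) (vs_scal 1 w)) with u by vsolve (w :: u :: nil). lra. }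
  pose proof (Hf3 (vs_add w u) (subadd HS w u (HDS w Hw) Hu)). rewrite Hf1 in H by auto. lra.
Qed.

Lemma inv_pos_nat j : 0 < / (INR j + 1).
Proof. apply Rinv_0_lt_compat. pose proof (pos_INR j); lra. Qed.

Lemma arch_inv eps : 0 < eps -> exists N, / (INR N + 1) < eps.
Proof.
intro H. destruct (archimed_cor1 eps H) as [N [H1 H2]]. exists N.
apply Rle_lt_trans with (/ INR N); auto. apply Rinv_le_contravar.
apply lt_0_INR; auto. lra.
Qed.

Lemma le_of_eps x b : (forall j, x <= b + / (INR j + 1)) -> x <= b.
Proof.
intro H. destruct (Rle_dec x b) as [h|h]; auto. exfalso.
destruct (arch_inv (x - b)) as [N HN]; [lra|]. specialize (H N). lra.
Qed.

Lemma inv_mono k j : (k <= j)%nat -> / (INR j + 1) <= / (INR k + 1).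
Proof.
intro H. apply Rinv_le_contravar. pose proof (pos_INR k); lra.
apply le_INR in H. lra.
Qed.

Theorem mainTheorem16
  (Vt Wt : VecSpace) (inV : Vt -> Prop) (nV : Vt -> R)
  (inW : Wt -> Prop) (nW : Wt -> R) (Rel : Vt -> Wt -> Prop)
  (le : Vt -> Vt -> Prop)
  (HU : ordered_gradient_space Vt Wt inV nV inW nW Rel le)
  (psi1 psi2 : Vt)
  (H1 : Bplus Vt inV le psi1) (H2 : Bplus Vt inV le psi2)
  (m : Vt) (Hm : is_max Vt inV nV le psi1 psi2 m) :
  exists! u, Omega' Vt inV le psi1 psi2 u /\
    is_inf (fun r => exists v, Omega' Vt inV le psi1 psi2 v /\ r = nV (vs_sub m v))
           (nV (vs_sub m u)).
Proof.
destruct HU as [[[_ [_ [HBan [Hrefl _]]]] [[Lrefl [Ltrans [Ladd Lscal]]] Lclos]] [Hsc Hmono]].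
destruct HBan as [HS [Hn _]].
set (S := inV) in *. set (n := nV) in *.
set (Om := Omega' Vt inV le psi1 psi2).
destruct Hm as [[Hm0 [Hm1 Hm2]] _].
assert (Lmono2 : forall a b c d, le a c -> le b d -> le (vs_add a b) (vs_add c d)).
{ intros a b c d h1 h2. apply Ltrans with (vs_add a d). apply Ladd; auto.
  rewrite (vs_addC _ a d), (vs_addC _ c d). apply Ladd; auto. }
assert (OmS : forall w, Om w -> S w) by (intros w [h _]; exact h).
assert (Om_conv : forall a b l, Om a -> Om b -> 0 <= l <= 1 ->
          Om (vs_add (vs_scal l a) (vs_scal (1 - l) b))).
{ intros a b l [Sa [Za [Pa Qa]]] [Sb [Zb [Pb Qb]]] Hl.
  assert (Z : forall w c, le vs_zero w -> 0 <= c -> le vs_zero (vs_scal c w)).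
  { intros w c h hc. rewrite <- (vscalz c). apply Lscal; auto. }
  assert (U : forall psi, le a psi -> le b psi -> le (vs_add (vs_scal l a) (vs_scal (1 - l) b)) psi).
  { intros psi ha hb.
    assert (Ep : vs_add (vs_scal l psi) (vs_scal (1 - l) psi) = psi) by vsolve (psi :: nil).
    rewrite <- Ep.
    apply Lmono2; apply Lscal; auto; lra. }
  split; [|split; [|split]].
  - apply subadd; auto; apply subscal; auto.
  - replace (@vs_zero Vt) with (vs_add (@vs_zero Vt) vs_zero) by vsolve (@nil Vt).
    apply Lmono2; apply Z; auto; lra.
  - apply U; auto.
  - apply U; auto. }
assert (Om_clos : forall (w : nat -> Vt) v, (forall j, Om (w j)) -> S v ->
          converges Vt n w v -> Om v).
{ intros w v Hw Hv Hc. split; [auto|split; [|split]].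
  - assert (h : le (vs_opp v) vs_zero).
    { apply (Lclos (fun j => vs_opp (w j))).
      + intro j. apply subopp; auto.
      + intro j. destruct (Hw j) as [_ [Z _]].
        pose proof (Ladd (vs_opp (w j)) vs_zero (w j) Z) as h.
        replace (vs_add (vs_opp (w j)) vs_zero) with (vs_opp (w j)) in h by vsolve (w j :: nil).
        replace (vs_add (vs_opp (w j)) (w j)) with (@vs_zero Vt) in h by vsolve (w j :: nil).
        exact h.
      + apply subopp; auto.
      + intros eps Heps. destruct (Hc eps Heps) as [N HN]. exists N. intros k Hk.
        replace (vs_sub (vs_opp (w k)) (vs_opp v)) with (vs_opp (vs_sub (w k) v)) by vsolve (w k :: v :: nil).
        rewrite (n_opp Hn) by (apply subsub; auto). auto. }
    pose proof (Ladd v _ _ h) as h'.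
    replace (vs_add v (vs_opp v)) with (@vs_zero Vt) in h' by vsolve (v :: nil).
    replace (vs_add v vs_zero) with v in h' by vsolve (v :: nil). exact h'.
  - apply (Lclos w); auto. intro j; destruct (Hw j) as [_ [_ [h _]]]; auto.
  - apply (Lclos w); auto. intro j; destruct (Hw j) as [_ [_ [_ h]]]; auto. }
assert (Om_bd : forall w, Om w -> n w <= n m).
{ intros w [Sw [Zw [Pw _]]]. apply Hmono; auto. apply Ltrans with psi1; auto. }
assert (Om0 : Om vs_zero).
{ split; [apply sub0; auto|split; [apply Lrefl|split]]. apply H1. apply H2. }
set (A := fun r => exists v, Om v /\ r = n (vs_sub m v)).
assert (HA : is_inf A (infR A)).
{ apply infR_spec. exists (n (vs_sub m vs_zero)), vs_zero; auto.
  exists 0. intros r [w [Hw ->]]. apply (n_nonneg Hn). apply subsub; auto. }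
set (d := infR A) in *.
assert (d_lb : forall w, Om w -> d <= n (vs_sub m w)).
{ intros w Hw. apply (inf_lb _ _ _ HA). exists w; auto. }
assert (Hex : forall j, exists w, Om w /\ n (vs_sub m w) < d + / (INR j + 1)).
{ intro j. apply NNPP. intro Hno.
  assert (d + / (INR j + 1) <= d).
  { apply (inf_glb _ _ _ HA). intros r [w [Hw ->]].
    apply Rnot_lt_le. intro Hlt. apply Hno. exists w; auto. }
  pose proof (inv_pos_nat j). lra. }
set (vs := fun j => epsilon (inhabits vs_zero) (fun w => Om w /\ n (vs_sub m w) < d + / (INR j + 1))).
assert (Hvs : forall j, Om (vs j) /\ n (vs_sub m (vs j)) < d + / (INR j + 1)).
{ intro j. unfold vs. apply epsilon_spec. apply Hex. }
(* Banach limit and weak limit *)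
destruct banach_limit as [L [HL1 [HL2 [HL3 HL4]]]].
assert (Bdf : forall f, bounded_linear Vt S n f -> Bd (fun j => f (vs j))).
{ intros f [_ [_ [C HC]]]. exists (Rabs C * n m). intro j.
  pose proof (HC (vs j) (OmS _ (proj1 (Hvs j)))).
  pose proof (Om_bd _ (proj1 (Hvs j))). pose proof (n_nonneg Hn (vs j) (OmS _ (proj1 (Hvs j)))).
  apply Rle_trans with (C * n (vs j)); auto.
  apply Rle_trans with (Rabs C * n (vs j)). apply Rmult_le_compat_r; auto. apply RRle_abs.
  apply Rmult_le_compat_l; auto. apply Rabs_pos. }
set (Phi := fun f : Vt -> R => L (fun j => f (vs j))).
assert (HPhi : bidual_elem Vt S n Phi).
{ split; [|split; [|split]].
  - intros f g _ _ Hfg. unfold Phi. f_equal. extensionality j. apply Hfg. apply OmS, Hvs.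
  - intros f g Hf Hg. unfold Phi. apply HL1; apply Bdf; auto.
  - intros a f Hf. unfold Phi. apply HL2; apply Bdf; auto.
  - exists (n m). intros f M Hf HM HfM. unfold Phi. rewrite Rmult_comm. apply HL4.
    intro j. apply Rle_trans with (M * n (vs j)). apply HfM, OmS, Hvs.
    apply Rmult_le_compat_l; auto. apply Om_bd, Hvs. }
destruct (Hrefl Phi HPhi) as [v [Sv Hv]].
set (Dk := fun k w => Om w /\ n (vs_sub m w) <= d + / (INR k + 1)).
assert (HDk : forall k, Dk k v).
{ intro k. apply NNPP. intro Hnot.
  assert (Hgap : exists del, 0 < del /\ forall w, Dk k w -> del <= n (vs_sub v w)).
  { apply NNPP. intro Hng.
    assert (Hseq : forall j, exists w, Dk k w /\ n (vs_sub v w) < / (INR j + 1)).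
    { intro j. apply NNPP. intro hj. apply Hng. exists (/ (INR j + 1)). split. apply inv_pos_nat.
      intros w Hw. apply Rnot_lt_le. intro hl. apply hj. exists w; auto. }
    set (ws := fun j => epsilon (inhabits vs_zero) (fun w => Dk k w /\ n (vs_sub v w) < / (INR j + 1))).
    assert (Hws : forall j, Dk k (ws j) /\ n (vs_sub v (ws j)) < / (INR j + 1)).
    { intro j. unfold ws. apply epsilon_spec. apply Hseq. }
    apply Hnot. split.
    - apply (Om_clos ws); auto. intro j; apply Hws.
      intros eps Heps. destruct (arch_inv eps Heps) as [N HN]. exists N. intros j Hj.
      rewrite (n_subC HS Hn) by (auto; apply OmS, Hws).
      pose proof (inv_mono _ _ Hj). pose proof (proj2 (Hws j)). lra.
    - apply le_of_eps. intro j.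
      destruct (Hws j) as [[HOm Hb] Hc].
      replace (vs_sub m v) with (vs_add (vs_sub m (ws j)) (vs_sub (ws j) v)) by vsolve (m :: v :: ws j :: nil).
      eapply Rle_trans. apply (n_tri Hn); apply subsub; auto.
      rewrite (n_subC HS Hn (ws j) v) by auto.
      lra. }
  destruct Hgap as [del [Hdel Hgap]].
  set (d0 := vs k).
  assert (Hd0 : Dk k d0) by (split; [apply Hvs|left; apply Hvs]).
  assert (Sd0 : S d0) by (apply OmS, Hd0).
  set (D' := fun e => S e /\ Dk k (vs_add e d0)).
  destruct (sep0 S n HS Hn D' (fun e h => proj1 h)) with (z := vs_sub v d0) (d := del)
    as [f [Hf [eps [Heps Hfe]]]].
  - split. apply sub0; auto. replace (vs_add vs_zero d0) with d0 by vsolve (d0 :: nil). exact Hd0.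
  - intros a b l [Sa [Oa Na]] [Sb [Ob Nb]] Hl. split. apply subadd; auto; apply subscal; auto.
    replace (vs_add (vs_add (vs_scal l a) (vs_scal (1 - l) b)) d0) with
      (vs_add (vs_scal l (vs_add a d0)) (vs_scal (1 - l) (vs_add b d0))) by vsolve (a :: b :: d0 :: nil).
    split. apply Om_conv; auto.
    set (a' := vs_add a d0) in *. set (b' := vs_add b d0) in *.
    replace (vs_sub m (vs_add (vs_scal l a') (vs_scal (1 - l) b'))) with
      (vs_add (vs_scal l (vs_sub m a')) (vs_scal (1 - l) (vs_sub m b'))) by vsolve (m :: a' :: b' :: nil).
    assert (Sa' : S a') by (apply OmS; auto). assert (Sb' : S b') by (apply OmS; auto).
    eapply Rle_trans. apply (n_tri Hn); apply (subscal HS); apply (subsub HS); auto.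
    rewrite !(n_hom Hn) by (apply subsub; auto).
    rewrite (Rabs_right l), (Rabs_right (1 - l)) by lra.
    apply Rle_trans with (l * (d + / (INR k + 1)) + (1 - l) * (d + / (INR k + 1))).
    apply Rplus_le_compat; apply Rmult_le_compat_l; lra. lra.
  - apply subsub; auto.
  - exact Hdel.
  - intros w [Sw Dw]. replace (vs_sub (vs_sub v d0) w) with (vs_sub v (vs_add w d0)) by vsolve (v :: w :: d0 :: nil).
    apply Hgap; auto.
  - assert (Hflin : forall a b, S a -> S b -> f (vs_sub a b) = f a - f b).
    { destruct Hf as [Hf1 [Hf2 _]]. intros a b Sa Sb. unfold vs_sub. rewrite Hf1 by (auto; apply subopp; auto).
      rewrite vopp_scal, Hf2 by auto. ring. }
    assert (Hbound : L (fun j => f (vs j)) <= f v - eps).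
    { apply (HL3 _ k). apply Bdf; auto. intros j Hj.
      assert (h : D' (vs_sub (vs j) d0)).
      { split. apply subsub; auto. apply OmS, Hvs.
        replace (vs_add (vs_sub (vs j) d0) d0) with (vs j) by vsolve (vs j :: d0 :: nil).
        split. apply Hvs. pose proof (inv_mono _ _ Hj). pose proof (proj2 (Hvs j)). lra. }
      specialize (Hfe _ h). rewrite !Hflin in Hfe by (auto; apply OmS, Hvs). lra. }
    specialize (Hv f Hf). unfold Phi in Hv. lra. }
assert (Omv : Om v) by (apply (HDk 0%nat)).
assert (Nv : n (vs_sub m v) = d).
{ apply Rle_antisym. apply le_of_eps; intro j; apply (HDk j). apply d_lb; auto. }
assert (Huniq : forall a b, Om a -> Om b -> n (vs_sub m a) = d -> n (vs_sub m b) = d -> a = b).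
{ intros a b Oa Ob Na Nb. apply NNPP; intro Hab.
  assert (Sa : S a) by auto. assert (Sb : S b) by auto.
  assert (Sma : S (vs_sub m a)) by (apply subsub; auto).
  assert (Smb : S (vs_sub m b)) by (apply subsub; auto).
  assert (Hd0 : 0 <= d) by (rewrite <- Na; apply (n_nonneg Hn); auto).
  assert (back : vs_sub m a = vs_sub m b -> a = b).
  { intro h. replace a with (vs_sub m (vs_sub m a)) by vsolve (m :: a :: nil).
    replace b with (vs_sub m (vs_sub m b)) by vsolve (m :: b :: nil). rewrite h; reflexivity. }
  destruct (Req_dec d 0) as [Hz|Hz].
  - apply Hab, back. rewrite (n_eq0 Hn (vs_sub m a)), (n_eq0 Hn (vs_sub m b)); auto; lra.
  - assert (Hd : 0 < d) by lra.
    assert (Sx : S (vs_scal (/ d) (vs_sub m a))) by (apply subscal; auto).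
    assert (Sy : S (vs_scal (/ d) (vs_sub m b))) by (apply subscal; auto).
    assert (nx : forall w, S w -> n w = d -> n (vs_scal (/ d) w) = 1).
    { intros w Sw Nw. rewrite (n_hom Hn) by auto. rewrite Nw, Rabs_right.
      field; lra. left; apply Rinv_0_lt_compat; lra. }
    assert (Hxy : vs_scal (/ d) (vs_sub m a) <> vs_scal (/ d) (vs_sub m b)).
    { intro h. apply Hab, back.
      replace (vs_sub m a) with (vs_scal d (vs_scal (/ d) (vs_sub m a))) by vsolveT (m :: a :: nil) ltac:(field; lra).
      rewrite h. vsolveT (m :: b :: nil) ltac:(field; lra). }
    pose proof (Hsc _ _ Sx Sy (nx _ Sma Na) (nx _ Smb Nb) Hxy) as hs.
    set (mid := vs_add (vs_scal (/ 2) a) (vs_scal (1 - / 2) b)).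
    assert (Omid : Om mid) by (apply Om_conv; auto; lra).
    assert (E1 : vs_scal (/ 2) (vs_add (vs_scal (/ d) (vs_sub m a)) (vs_scal (/ d) (vs_sub m b)))
                 = vs_scal (/ d) (vs_sub m mid)).
    { unfold mid. vsolveT (m :: a :: b :: nil) ltac:(field; lra). }
    rewrite E1, (n_hom Hn) in hs by (apply subsub; auto).
    rewrite Rabs_right in hs by (left; apply Rinv_0_lt_compat; lra).
    pose proof (d_lb mid Omid).
    assert (n (vs_sub m mid) < d).
    { apply Rmult_lt_reg_l with (/ d). apply Rinv_0_lt_compat; lra.
      rewrite Rinv_l by lra. exact hs. }
    lra. }
exists v. split.
- split; auto. rewrite Nv. exact HA.
- intros u [Ou Iu]. assert (Nu : n (vs_sub m u) = d) by (apply (inf_unique A); auto).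
  apply Huniq; auto.
Qed.
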